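(* Let $\sigma_1,\sigma_2\subset\mathbb{Q}^n$ be strongly convex rational polyhedral cones with $\dim\sigma_1=n_1$, $\dim\sigma_2=n_2$, having $k_1$ and $k_2$ extreme rays respectively, and suppose there is $\mathbf{a}\in\sigma_1\cap\sigma_2$ with $\mathrm{span}_{\mathbb{Q}}(\sigma_1)\cap\mathrm{span}_{\mathbb{Q}}(\sigma_2)=\mathbb{Q}\mathbf{a}$. Let $\sigma=\sigma_1\oplus\sigma_2=\mathrm{pos}_{\mathbb{Q}}(\sigma_1\cup\sigma_2)$ be their direct sum along $\mathbf{a}$. Then $\dim\sigma=n_1+n_2-1$; moreover $\sigma$ has exactly $k_1+k_2$ extreme rays if the direct sum is of internal type, and exactly $k_1+k_2-1$ extreme rays if it is of external type.
   Context: $\mathrm{span}_{\mathbb{Q}}(B)$ and $\mathrm{pos}_{\mathbb{Q}}(B)$ denote the rational linear hull and the set of nonnegative rational combinations of $B$. A cone $\sigma$ is strongly convex if $\sigma\cap(-\sigma)=\{\mathbf 0\}$; its dimension is $\dim_{\mathbb{Q}}\mathrm{span}_{\mathbb{Q}}(\sigma)$. A face of $\sigma$ is a set $\sigma\cap\{\mathbf{x}:\mathbf{c}\cdot\mathbf{x}=0\}$ where $\mathbf{c}\in\mathbb{Q}^n$ satisfies $\mathbf{c}\cdot\mathbf{x}\ge0$ for all $\mathbf{x}\in\sigma$; extreme rays are the faces of dimension one, written $\mathbb{Q}_{\ge0}\mathbf{r}$. The direct sum $\sigma_1\oplus\sigma_2$ along $\mathbf{a}$ is called of external type if $\mathbf{a}$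 lies on an extreme ray of $\sigma_1$ or of $\sigma_2$ (or both), and of internal type otherwise. *)

(* Defs.v *)
From mathcomp Require Import all_boot all_order all_algebra.
Set Implicit Arguments. Unset Strict Implicit. Unset Printing Implicit Defensive.
Import Order.TTheory GRing.Theory Num.Theory.
Local Open Scope ring_scope.

Definition vec (n : nat) := 'rV[rat]_n.
Definition qset (n : nat) := vec n -> Prop.

Definition dot (n : nat) (c x : vec n) : rat := \sum_(i < n) c ord0 i * x ord0 i.

Definition qpos (n : nat) (B : qset n) : qset n := fun x =>
  exists (m : nat) (v : 'I_m -> vec n) (l : 'I_m -> rat),
    (forall i, B (v i)) /\ (forall i, 0 <= l i) /\ x = \sum_(i < m) l i *: v i.

Definition qspan (n : nat) (B : qset n) : qset n := fun x =>
  exists (m : nat) (v : 'I_m -> vec n) (l : 'I_m -> rat),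
    (forall i, B (v i)) /\ x = \sum_(i < m) l i *: v i.

Definition poly_cone (n : nat) (s : qset n) : Prop :=
  exists gs : seq (vec n), forall x, s x <-> qpos (fun y => y \in gs) x.

Definition strongly_convex (n : nat) (s : qset n) : Prop :=
  forall x, s x -> s (- x) -> x = 0.

(* dim_Q span_Q(S) = d : span_Q(S) has a basis of d vectors (rows of M) *)
Definition has_dim (n : nat) (S : qset n) (d : nat) : Prop :=
  exists M : 'M[rat]_(d, n),
    row_free M /\ (forall i, qspan S (row i M)) /\
    (forall x, qspan S x -> (x <= M)%MS).

Definition is_face (n : nat) (s F : qset n) : Prop :=
  exists c : vec n, (forall x, s x -> 0 <= dot c x) /\
    (forall x, F x <-> (s x /\ dot c x = 0)).

Definition is_extreme_ray (n : nat) (s F : qset n) : Prop :=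
  is_face s F /\ has_dim F 1.

Definition num_extreme_rays (n : nat) (s : qset n) (k : nat) : Prop :=
  exists f : 'I_k -> qset n,
    (forall i, is_extreme_ray s (f i)) /\
    (forall i j, (forall x, f i x <-> f j x) -> i = j) /\
    (forall F, is_extreme_ray s F -> exists i, forall x, F x <-> f i x).

Definition on_extreme_ray (n : nat) (s : qset n) (a : vec n) : Prop :=
  exists F, is_extreme_ray s F /\ F a.

Definition external_type (n : nat) (s1 s2 : qset n) (a : vec n) : Prop :=
  on_extreme_ray s1 a \/ on_extreme_ray s2 a.

(* Main.v *)
Require Import Defs.
Set Warnings "-all".
From mathcomp Require Import all_boot all_order all_algebra.
From mathcomp Require Import lra.
From Stdlib Require Import Classical.
Import Order.TTheory GRing.Theory Num.Theory.
Set Implicit Arguments. Unset Strict Implicit. Unset Printing Implicit Defensive.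
Local Open Scope ring_scope.

Section Basic.
Variable n : nat.
Implicit Types (x y c : vec n) (B S : qset n).

Lemma dotE c x : dot c x = (x *m c^T) 0 0.
Proof. rewrite /dot mxE; apply: eq_bigr => i _; by rewrite mxE mulrC. Qed.

Lemma dotDr c x y : dot c (x + y) = dot c x + dot c y.
Proof. by rewrite !dotE mulmxDl mxE. Qed.
Lemma dotZr c t x : dot c (t *: x) = t * dot c x.
Proof. by rewrite !dotE -scalemxAl mxE. Qed.
Lemma dot0r c : dot c 0 = 0.
Proof. by rewrite dotE mul0mx mxE. Qed.
Lemma dotNr c x : dot c (- x) = - dot c x.
Proof. by rewrite !dotE mulNmx mxE. Qed.
Lemma dotDl c c' x : dot (c + c') x = dot c x + dot c' x.
Proof. by rewrite !dotE linearD /= mulmxDr mxE. Qed.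
Lemma dotZl t c x : dot (t *: c) x = t * dot c x.
Proof. by rewrite !dotE linearZ /= -scalemxAr mxE. Qed.
Lemma dot_sumr c m (F : 'I_m -> vec n) : dot c (\sum_(i < m) F i) = \sum_(i < m) dot c (F i).
Proof.
rewrite dotE mulmx_suml summxE. apply: eq_bigr => i _; by rewrite dotE.
Qed.

Lemma qpos_sub B x : B x -> qpos B x.
Proof.
move=> Bx; exists 1%N, (fun _ => x), (fun _ => 1); split=> //; split=> // .
by rewrite big_ord1 scale1r.
Qed.

Lemma qpos0 B : qpos B 0.
Proof.
exists 0%N, (fun _ => 0), (fun _ => 0).
split; [by case|split; [by case|by rewrite big_ord0]].
Qed.

Lemma qposD B x y : qpos B x -> qpos B y -> qpos B (x + y).
Proof.
move=> [m1 [v1 [l1 [H1 [L1 ->]]]]] [m2 [v2 [l2 [H2 [L2 ->]]]]].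
exists (m1 + m2)%N, (fun i => match split i with inl a => v1 a | inr b => v2 b end),
  (fun i => match split i with inl a => l1 a | inr b => l2 b end).
split; first by move=> i; case: (split i).
split; first by move=> i; case: (split i).
rewrite big_split_ord /=; congr (_ + _); apply: eq_bigr => i _.
  by rewrite (unsplitK (inl i)).
by rewrite (unsplitK (inr i)).
Qed.

Lemma qposZ B t x : 0 <= t -> qpos B x -> qpos B (t *: x).
Proof.
move=> t0 [m [v [l [H [L ->]]]]]; exists m, v, (fun i => t * l i).
split=> //; split; first by move=> i; rewrite mulr_ge0.
by rewrite scaler_sumr; apply: eq_bigr => i _; rewrite scalerA.
Qed.

Lemma qspan_sub B x : B x -> qspan B x.
Proof.
move=> Bx; exists 1%N, (fun _ => x), (fun _ => 1); split=> //.
by rewrite big_ord1 scale1r.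
Qed.

Lemma qspan0 B : qspan B 0.
Proof.
exists 0%N, (fun _ => 0), (fun _ => 0).
split; [by case|by rewrite big_ord0].
Qed.

Lemma qspanD B x y : qspan B x -> qspan B y -> qspan B (x + y).
Proof.
move=> [m1 [v1 [l1 [H1 ->]]]] [m2 [v2 [l2 [H2 ->]]]].
exists (m1 + m2)%N, (fun i => match split i with inl a => v1 a | inr b => v2 b end),
  (fun i => match split i with inl a => l1 a | inr b => l2 b end).
split; first by move=> i; case: (split i).
rewrite big_split_ord /=; congr (_ + _); apply: eq_bigr => i _.
  by rewrite (unsplitK (inl i)).
by rewrite (unsplitK (inr i)).
Qed.

Lemma qspanZ B t x : qspan B x -> qspan B (t *: x).
Proof.
move=> [m [v [l [H ->]]]]; exists m, v, (fun i => t * l i).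
split=> //.
by rewrite scaler_sumr; apply: eq_bigr => i _; rewrite scalerA.
Qed.

Lemma qspan_sum B m (F : 'I_m -> vec n) :
  (forall i, qspan B (F i)) -> qspan B (\sum_(i < m) F i).
Proof.
move=> H; elim/big_rec: _ => [|i y _ Hy]; first exact: qspan0.
exact: qspanD.
Qed.

Lemma qspan_mono B S x : (forall y, B y -> S y) -> qspan B x -> qspan S x.
Proof. by move=> BS [m [v [l [H ->]]]]; exists m, v, l; split=> // i; apply: BS. Qed.

Lemma qpos_mono B S x : (forall y, B y -> S y) -> qpos B x -> qpos S x.
Proof. by move=> BS [m [v [l [H [L ->]]]]]; exists m, v, l; split=> // i; apply: BS. Qed.

Lemma qspan_idem B x : qspan (qspan B) x -> qspan B x.
Proof.
move=> [m [v [l [H ->]]]]; apply: qspan_sum => i; exact: qspanZ.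
Qed.

Lemma qpos_qspan B x : qpos B x -> qspan B x.
Proof. by move=> [m [v [l [H [_ ->]]]]]; exists m, v, l. Qed.

Definition cone S := S 0 /\ (forall x y, S x -> S y -> S (x + y)) /\
  (forall t x, 0 <= t -> S x -> S (t *: x)).

Lemma qpos_cone B : cone (qpos B).
Proof. split; [exact: qpos0|split; [exact: qposD|exact: qposZ]]. Qed.

Lemma cone_qpos S x : cone S -> qpos S x -> S x.
Proof.
move=> [S0 [SD SZ]] [m [v [l [H [L ->]]]]].
elim/big_rec: _ => [|i y _ Hy] //; apply: SD => //; exact: SZ.
Qed.

Lemma poly_cone_cone S : poly_cone S -> cone S.
Proof.
move=> [gs H]; have E x : S x <-> qpos (fun y => y \in gs) x := H x.
split; first by apply/E; exact: qpos0.
split; first by move=> x y /E Hx /E Hy; apply/E; exact: qposD.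
by move=> t x t0 /E Hx; apply/E; exact: qposZ.
Qed.

Lemma sc_sum0 S x y : strongly_convex S -> cone S -> S x -> S y -> x + y = 0 -> x = 0.
Proof.
move=> Hsc _ Sx Sy /eqP; rewrite addr_eq0 => /eqP xE.
apply: Hsc => //; by rewrite xE opprK.
Qed.

End Basic.

Section Dim.
Variable n : nat.
Implicit Types (x y c r : vec n) (B S F T : qset n).

Lemma span_mx S d : has_dim S d ->
  exists M : 'M[rat]_(d, n), \rank M = d /\ forall x, qspan S x <-> (x <= M)%MS.
Proof.
move=> [M [rf [rows sub]]]; exists M; split; first exact/eqP.
move=> x; split; first exact: sub.
move=> xM; rewrite -(mulmxKpV xM) mulmx_sum_row.
apply: qspan_sum => i; apply: qspanZ; exact: rows.
Qed.

Lemma has_dim_rank S m (A : 'M[rat]_(m, n)) :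
  (forall x, qspan S x <-> (x <= A)%MS) -> has_dim S (\rank A).
Proof.
move=> H; exists (row_base A); split; first exact: row_base_free.
split.
  move=> i; apply/H; apply: submx_trans (row_sub i _) _; by rewrite eq_row_base.
by move=> x /H; rewrite eq_row_base.
Qed.

Lemma has_dim_ext S T d : (forall x, S x <-> T x) -> has_dim S d -> has_dim T d.
Proof.
move=> E [M [rf [rows sub]]]; exists M; split=> //; split.
  by move=> i; apply: qspan_mono (rows i) => y /E.
by move=> x Hx; apply: sub; apply: qspan_mono Hx => y /E.
Qed.

Lemma has_dim_uniq S d d' : has_dim S d -> has_dim S d' -> d = d'.
Proof.
move=> /span_mx [M [rM HM]] /span_mx [M' [rM' HM']].
rewrite -rM -rM'; apply: eqmx_rank; apply/andP; split; apply/row_subP => i.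
  by apply/HM'/HM; exact: row_sub.
by apply/HM/HM'; exact: row_sub.
Qed.

Definition ray r : qset n := fun x => exists t, 0 <= t /\ x = t *: r.

Lemma qspan_ray r x : qspan (ray r) x <-> (x <= r)%MS.
Proof.
split.
  move=> [m [v [l [H ->]]]]; apply: summx_sub => i _; apply: scalemx_sub.
  by case: (H i) => t [_ ->]; apply: scalemx_sub; exact: submx_refl.
move=> /submxP [D ->]; rewrite (mx11_scalar D) mul_scalar_mx.
apply: qspanZ; apply: qspan_sub; exists 1; by rewrite scale1r.
Qed.

Lemma has_dim_ray r : r != 0 -> has_dim (ray r) 1.
Proof. by move=> rn; have := has_dim_rank (qspan_ray r); rewrite rank_rV rn. Qed.

Lemma ray_self r : ray r r.
Proof. by exists 1; rewrite scale1r. Qed.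

Lemma ray_char S F : cone S -> strongly_convex S -> is_face S F -> has_dim F 1 ->
  exists r, r != 0 /\ S r /\ (forall x, F x <-> ray r x).
Proof.
move=> [S0 [SD SZ]] Hsc [c [cpos Fc]] /span_mx [M [rM HM]].
have [r [Fr rnz]] : exists r, F r /\ r != 0.
  apply: NNPP => Hn.
  have F0 x : F x -> x = 0.
    move=> Fx; case: (eqVneq x 0) => // nz; exfalso; apply: Hn; by exists x.
  have : qspan F M by apply/HM.
  move=> [m [v [l [H ME]]]].
  have M0 : M = 0 by rewrite ME big1 // => i _; rewrite (F0 _ (H i)) scaler0.
  by move: rM; rewrite M0 mxrank0.
have Sr : S r by case: (Fc r) => + _ => /(_ Fr) [].
exists r; split=> //; split=> // x; split.
  move=> Fx.
  have rleM : (r <= M)%MS by apply/HM; exact: qspan_sub.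
  have rEM : (r == M)%MS.
    by rewrite -(mxrank_leqif_eq rleM).2 rank_rV rnz rM.
  have : (x <= r)%MS.
    apply: submx_trans (_ : (x <= M)%MS) _; first by apply/HM; exact: qspan_sub.
    by case/andP: rEM.
  have Sx : S x by case: (Fc x) => + _ => /(_ Fx) [].
  move=> /submxP [D xE]; move: xE Sx; rewrite (mx11_scalar D) mul_scalar_mx => -> Sx.
  exists (D 0 0); split=> //.
  case: (leP 0 (D 0 0)) => // tneg; exfalso.
  have : S (- r).
    have -> : - r = (- D 0 0)^-1 *: (D 0 0 *: r).
      rewrite scalerA invrN mulNr mulVf ?scaleN1r //; by rewrite lt_eqF.
    apply: SZ => //; rewrite invr_ge0 oppr_ge0; exact: ltW.
  move=> /(Hsc r Sr) r0; by rewrite r0 eqxx in rnz.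
move=> [t [t0 ->]]; apply/Fc; split; first exact: SZ.
rewrite dotZr; case: (Fc r) => + _ => /(_ Fr) [_ ->]; by rewrite mulr0.
Qed.

End Dim.

Section Gordan.

Lemma seq_max (s : seq rat) : s != [::] ->
  exists2 m, m \in s & forall l, l \in s -> l <= m.
Proof.
elim: s => // x s IH _; case: s IH => [|y s] IH.
  by exists x; [rewrite inE | move=> l; rewrite inE => /eqP ->].
case: IH => // m mIn mMax; case: (leP x m) => h.
  exists m; first by rewrite inE mIn orbT.
  by move=> l; rewrite inE => /orP [/eqP ->|/mMax].
exists x; first by rewrite inE eqxx.
move=> l; rewrite inE => /orP [/eqP ->|/mMax lm] //; exact: le_trans lm (ltW h).
Qed.

Lemma seq_min (s : seq rat) : s != [::] ->
  exists2 m, m \in s & forall l, l \in s -> m <= l.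
Proof.
elim: s => // x s IH _; case: s IH => [|y s] IH.
  by exists x; [rewrite inE | move=> l; rewrite inE => /eqP ->].
case: IH => // m mIn mMax; case: (leP m x) => h.
  exists m; first by rewrite inE mIn orbT.
  by move=> l; rewrite inE => /orP [/eqP ->|/mMax].
exists x; first by rewrite inE eqxx.
move=> l; rewrite inE => /orP [/eqP ->|/mMax lm] //; exact: le_trans (ltW h) lm.
Qed.

Lemma sep (Ls Us : seq rat) : (forall l u, l \in Ls -> u \in Us -> l < u) ->
  exists t, (forall l, l \in Ls -> l < t) /\ (forall u, u \in Us -> t < u).
Proof.
move=> H.
case: (eqVneq Ls [::]) => [->|/seq_max [m mIn mMax]];
  case: (eqVneq Us [::]) => [->|/seq_min [m' mIn' mMin]].
- by exists 0.
- exists (m' - 1); split=> // u /mMin; lra.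
- exists (m + 1); split=> // l /mMax; lra.
- have := H _ _ mIn mIn' => mm.
  exists ((m + m') / 2); split.
    move=> l /mMax; lra.
  move=> u /mMin; lra.
Qed.

Variable n : nat.

Definition hd (v : vec n.+1) : rat := v 0 ord0.
Definition tl (v : vec n.+1) : vec n := \row_j v 0 (lift ord0 j).
Definition ext (t : rat) (c : vec n) : vec n.+1 :=
  \row_j (if unlift ord0 j is Some k then c 0 k else t).

Lemma dot_ext t c v : dot (ext t c) v = t * hd v + dot c (tl v).
Proof.
rewrite /dot big_ord_recl !mxE unlift_none; congr (_ + _).
by apply: eq_bigr => i _; rewrite !mxE liftK.
Qed.

Lemma hdD u v : hd (u + v) = hd u + hd v. Proof. by rewrite /hd mxE. Qed.
Lemma hdZ t v : hd (t *: v) = t * hd v. Proof. by rewrite /hd mxE. Qed.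
Lemma hdN v : hd (- v) = - hd v. Proof. by rewrite /hd mxE. Qed.
Lemma hd0 : hd 0 = 0. Proof. by rewrite /hd mxE. Qed.
Lemma tlD u v : tl (u + v) = tl u + tl v. Proof. by apply/rowP => j; rewrite !mxE. Qed.
Lemma tlZ t v : tl (t *: v) = t *: tl v. Proof. by apply/rowP => j; rewrite !mxE. Qed.
Lemma tlN v : tl (- v) = - tl v. Proof. by apply/rowP => j; rewrite !mxE. Qed.
Lemma tl0 : tl 0 = 0. Proof. by apply/rowP => j; rewrite !mxE. Qed.

Lemma hdtl0 v : hd v = 0 -> tl v = 0 -> v = 0.
Proof.
move=> h t; apply/rowP => j; rewrite mxE.
case: (unliftP ord0 j) => [k ->|->].
  by have := congr1 (fun w : vec n => w 0 k) t; rewrite !mxE.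
by rewrite -h.
Qed.

End Gordan.

Lemma gordan n (s : seq (vec n)) :
  (forall v, v \in s -> ~ qpos (fun y => y \in s) (- v)) ->
  exists c, forall v, v \in s -> 0 < dot c v.
Proof.
elim: n s => [|n IH] s H.
  exists 0 => v vin; exfalso; apply: (H v vin).
  have -> : - v = 0 by apply/rowP => [[]].
  exact: qpos0.
pose Z := [seq v <- s | hd v == 0].
pose P := [seq v <- s | 0 < hd v].
pose N := [seq v <- s | hd v < 0].
pose comb (p q : vec n.+1) := (- hd q) *: p + hd p *: q.
pose s' := map (@tl n) Z ++ [seq tl (comb p q) | p <- P, q <- N].
have hcomb p q : hd (comb p q) = 0.
  by rewrite hdD !hdZ mulNr mulrC addNr.
have Lift u : u \in s' -> exists U, tl U = u /\ hd U = 0 /\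
   (U \in s \/ exists p q, [/\ p \in s, q \in s, 0 < hd p, hd q < 0 & U = comb p q]).
  rewrite mem_cat => /orP [/mapP [v vin ->]|/allpairsP [[p q] [pin qin ->]]].
    move: vin; rewrite mem_filter => /andP [/eqP h vin].
    by exists v; split=> //; split=> //; left.
  exists (comb p q); split=> //; split=> //; right; exists p, q.
  move: pin qin; rewrite !mem_filter => /andP [hp pin] /andP [hq qin]; by split.
have qU U : (U \in s \/ exists p q, [/\ p \in s, q \in s, 0 < hd p, hd q < 0 & U = comb p q])
   -> qpos (fun y => y \in s) U.
  case=> [Uin|[p [q [pin qin hp hq ->]]]]; first exact: qpos_sub.
  apply: qposD; apply: qposZ; try exact: qpos_sub.
    by rewrite oppr_ge0 ltW.
  exact: ltW.
have LiftQ y : qpos (fun u => u \in s') y -> exists Y, tl Y = y /\ hd Y = 0 /\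
      qpos (fun y => y \in s) Y.
  move=> [m [v [l [Hv [Hl ->]]]]].
  elim/big_rec: _ => [|i y' _ [Y [tY [hY qY]]]].
    by exists 0; rewrite tl0 hd0; split=> //; split=> //; exact: qpos0.
  case: (Lift _ (Hv i)) => U [tU [hU HU]].
  exists (l i *: U + Y); rewrite tlD tlZ hdD hdZ tU tY hU hY mulr0 addr0.
  split=> //; split=> //; apply: qposD => //; apply: qposZ => //; exact: qU.
have H' : forall u, u \in s' -> ~ qpos (fun y => y \in s') (- u).
  move=> u uin /LiftQ [Y [tY [hY qY]]].
  case: (Lift _ uin) => U [tU [hU HU]].
  have UY : U + Y = 0 by apply: hdtl0; [by rewrite hdD hU hY addr0|by rewrite tlD tU tY subrr].
  have YE : Y = - U by apply/eqP; rewrite -addr_eq0 addrC UY.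
  case: HU => [Uin|[p [q [pin qin hp hq UE]]]].
    by apply: (H U Uin); rewrite -YE.
  apply: (H p pin).
  have -> : - p = (- hd q)^-1 *: (Y + hd p *: q).
    rewrite YE UE /comb opprD subrK scalerN scalerA mulVf ?scale1r //.
    by rewrite oppr_eq0 lt_eqF.
  apply: qposZ; first by rewrite invr_ge0 oppr_ge0 ltW.
  apply: qposD => //; apply: qposZ; [exact: ltW|exact: qpos_sub].
case: (IH s' H') => c' Hc'.
pose Ls := [seq - dot c' (tl p) / hd p | p <- P].
pose Us := [seq dot c' (tl q) / (- hd q) | q <- N].
have [t [tL tU]] : exists t, (forall l, l \in Ls -> l < t) /\ (forall u, u \in Us -> t < u).
  apply: sep => l u /mapP [p pin ->] /mapP [q qin ->].
  have : tl (comb p q) \in s' by rewrite mem_cat allpairs_f ?orbT.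
  move/Hc'; rewrite tlD !tlZ dotDr !dotZr.
  move: pin qin; rewrite !mem_filter => /andP [hp _] /andP [hq _].
  move: hq; rewrite -oppr_gt0 => hq.
  move=> h; rewrite ltr_pdivrMr // mulrAC ltr_pdivlMr //.
  move: h; move: (dot c' (tl p)) (dot c' (tl q)) (hd p) (- hd q) => A B a b h; lra.
exists (ext t c') => v vin; rewrite dot_ext.
case: (ltgtP (hd v) 0) => hv.
- have : dot c' (tl v) / (- hd v) \in Us by apply: map_f; rewrite mem_filter hv.
  move/tU; rewrite ltr_pdivlMr ?oppr_gt0 //; lra.
- have : - dot c' (tl v) / hd v \in Ls by apply: map_f; rewrite mem_filter hv.
  move/tL; rewrite ltr_pdivrMr //; lra.
- have : tl v \in s' by rewrite mem_cat map_f ?mem_filter ?hv ?eqxx.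
  by move/Hc'; rewrite hv mulr0 add0r.
Qed.

Lemma pos_functional n (S : qset n) : poly_cone S -> strongly_convex S ->
  exists g, forall x, S x -> 0 <= dot g x /\ (dot g x = 0 -> x = 0).
Proof.
move=> Hp Hsc; have Hc := poly_cone_cone Hp; case: Hp => gs E.
pose gs' := [seq v <- gs | v != 0].
have [g Hg] : exists g, forall v, v \in gs' -> 0 < dot g v.
  apply: gordan => v; rewrite mem_filter => /andP [vn vin] Hq.
  have Sv : S v by apply/E; exact: qpos_sub.
  have Sv' : S (- v).
    by apply/E; apply: qpos_mono Hq => y; rewrite mem_filter => /andP [].
  by move: vn; rewrite (Hsc v Sv Sv') eqxx.
exists g => x /E [m [v [l [Hv [Hl ->]]]]].
have T i : 0 <= dot g (l i *: v i).
  rewrite dotZr; case: (eqVneq (v i) 0) => [->|vn]; first by rewrite dot0r mulr0.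
  by apply: mulr_ge0 => //; apply: ltW; apply: Hg; rewrite mem_filter vn Hv.
rewrite dot_sumr; split; first by apply: sumr_ge0 => i _.
move=> H0; apply: big1 => i _.
have := psumr_eq0P (fun i _ => T i) H0 (isT : xpredT i).
move=> /(_ i); rewrite dotZr; case: (eqVneq (v i) 0) => [->|vn]; first by rewrite scaler0.
move/eqP; rewrite mulf_eq0 => /orP [/eqP ->|]; first by rewrite scale0r.
by rewrite gt_eqF // Hg // mem_filter vn Hv.
Qed.

Lemma extend n d1 d2 (M1 : 'M[rat]_(d1, n)) (M2 : 'M[rat]_(d2, n)) (a c1 c2 : vec n) :
  (forall x : vec n, (x <= M1)%MS -> (x <= M2)%MS -> (x <= a)%MS) ->
  dot c1 a = dot c2 a ->
  exists c : vec n, (forall x : vec n, (x <= M1)%MS -> dot c x = dot c1 x) /\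
                    (forall x : vec n, (x <= M2)%MS -> dot c x = dot c2 x).
Proof.
move=> Hcap Ha.
pose A := col_mx M1 M2.
pose b := col_mx (M1 *m c1^T) (M2 *m c2^T).
have ac : a *m c1^T = a *m c2^T.
  by rewrite (mx11_scalar (a *m c1^T)) (mx11_scalar (a *m c2^T)) -!dotE Ha.
have Hb : (b^T <= A^T)%MS.
  rewrite submxE; set Y := cokermx A^T.
  have ZA : Y^T *m A = 0.
    have : (A^T *m Y)^T = 0 by rewrite mulmx_coker trmx0.
    by rewrite trmx_mul trmxK.
  set Z := Y^T in ZA.
  have ZA' : lsubmx Z *m M1 + rsubmx Z *m M2 = 0.
    by rewrite -mul_row_col hsubmxK.
  set K := lsubmx Z *m M1 in ZA'.
  have KE : K = (- rsubmx Z) *m M2.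
    by apply/eqP; rewrite mulNmx -addr_eq0 ZA'.
  have Ka : (K <= a)%MS.
    apply/row_subP => i; apply: Hcap.
      exact: submx_trans (row_sub i K) (submxMl _ _).
    rewrite KE; exact: submx_trans (row_sub i _) (submxMl _ _).
  have Zb : Z *m b = 0.
    rewrite -[Z]hsubmxK mul_row_col !mulmxA -/K.
    rewrite (_ : rsubmx Z *m M2 = - K); last by rewrite KE mulNmx opprK.
    have [T KT] := submxP Ka.
    by rewrite mulNmx KT -!mulmxA ac subrr.
  have : (Z *m b)^T = 0 by rewrite Zb trmx0.
  by rewrite trmx_mul /Z trmxK => ->.
pose c := b^T *m pinvmx A^T.
have cA : A *m c^T = b.
  have := congr1 trmx (mulmxKpV Hb); by rewrite trmx_mul !trmxK.
move: cA; rewrite /A /b mul_col_mx => /eq_col_mx [E1 E2].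
exists c; split => x /submxP [D ->]; rewrite !dotE -!mulmxA.
  by rewrite E1.
by rewrite E2.
Qed.

Section Generic.
Variable n : nat.
Implicit Types (x y c r : vec n) (B S F T sg : qset n).

Lemma num_split sg p q (g : 'I_p -> qset n) (h : 'I_q -> qset n) :
  (forall i, is_extreme_ray sg (g i)) -> (forall j, is_extreme_ray sg (h j)) ->
  (forall i i', (forall x, g i x <-> g i' x) -> i = i') ->
  (forall j j', (forall x, h j x <-> h j' x) -> j = j') ->
  (forall i j, ~ (forall x, g i x <-> h j x)) ->
  (forall F, is_extreme_ray sg F ->
     (exists i, forall x, F x <-> g i x) \/ (exists j, forall x, F x <-> h j x)) ->
  num_extreme_rays sg (p + q).
Proof.
move=> Hg Hh ig ih cr sj.
exists (fun k => match split k with inl i => g i | inr j => h j end).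
split; first by move=> k; case: (split k).
split.
  move=> k k'; case Ek: (split k) => [i|j]; case Ek': (split k') => [i'|j'] E.
  - by rewrite -(splitK k) -(splitK k') Ek Ek' (ig _ _ E).
  - by exfalso; apply: (cr i j').
  - by exfalso; apply: (cr i' j) => x; split => /E.
  - by rewrite -(splitK k) -(splitK k') Ek Ek' (ih _ _ E).
move=> F /sj [[i Fi]|[j Fj]].
  by exists (lshift q i); rewrite (unsplitK (inl i) : split (lshift q i) = inl i).
by exists (rshift p j); rewrite (unsplitK (inr j) : split (rshift p j) = inr j).
Qed.

Lemma face_scale S F x t : cone S -> is_face S F -> F x -> 0 <= t -> F (t *: x).
Proof.
move=> [_ [_ SZ]] [c [_ Fc]] /Fc [Sx cx] t0; apply/Fc; split; first exact: SZ.
by rewrite dotZr cx mulr0.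
Qed.

Lemma face_sub S F x : is_face S F -> F x -> S x.
Proof. by move=> [c [_ Fc]] /Fc []. Qed.

Lemma restrict_ray sg S F : is_extreme_ray sg F -> (forall x, S x -> sg x) ->
  (forall x, F x -> S x) -> is_extreme_ray S F.
Proof.
move=> [[c [cpos Fc]] HF] Ssg FS; split=> //; exists c; split.
  by move=> x /Ssg; apply: cpos.
move=> x; split; first by move=> Fx; split; [exact: FS | by case/Fc: Fx].
by move=> [Sx cx]; apply/Fc; split => //; exact: Ssg.
Qed.

Lemma ray_rescale F r a : (forall x, F x <-> ray r x) -> F a -> a != 0 ->
  forall x, F x <-> ray a x.
Proof.
move=> E /E [t [t0 aE]] an.
have tn : t != 0 by apply: contraNneq an => t0'; rewrite aE t0' scale0r.
have tp : 0 < t by rewrite lt_def tn.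
move=> x; split.
  move=> /E [u [u0 ->]]; exists (u / t); split; first by rewrite divr_ge0.
  by rewrite aE scalerA divfK.
move=> [u [u0 ->]]; apply/E; exists (u * t); split; first by rewrite mulr_ge0.
by rewrite aE scalerA.
Qed.

End Generic.

Section Main.
Variables (n d1 d2 : nat) (s1 s2 sg : qset n) (a : vec n).
Implicit Types (x y c r : vec n) (F R : qset n).
Variables (M1 : 'M[rat]_(d1, n)) (M2 : 'M[rat]_(d2, n)).
Hypotheses (Hp1 : poly_cone s1) (Hp2 : poly_cone s2).
Hypotheses (Hsc1 : strongly_convex s1) (Hsc2 : strongly_convex s2).
Hypotheses (Ha0 : a != 0) (Ha1 : s1 a) (Ha2 : s2 a).
Hypothesis (HM1 : forall x : vec n, qspan s1 x <-> (x <= M1)%MS).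
Hypothesis (HM2 : forall x : vec n, qspan s2 x <-> (x <= M2)%MS).
Hypothesis (Hcap : forall x : vec n, (qspan s1 x /\ qspan s2 x) <-> exists t : rat, x = t *: a).
Hypothesis (Hdec : forall x : vec n, sg x <-> exists x1 x2, s1 x1 /\ s2 x2 /\ x = x1 + x2).

Lemma Hc1 : cone s1. Proof. exact: poly_cone_cone. Qed.
Lemma Hc2 : cone s2. Proof. exact: poly_cone_cone. Qed.

Lemma sub1 x : s1 x -> sg x.
Proof. by move=> Sx; apply/Hdec; exists x, 0; rewrite addr0; case: Hc2. Qed.
Lemma sub2 x : s2 x -> sg x.
Proof. by move=> Sx; apply/Hdec; exists 0, x; rewrite add0r; case: Hc1. Qed.

Lemma inM1 x : s1 x -> (x <= M1)%MS.
Proof. by move=> Sx; apply/HM1; exact: qspan_sub. Qed.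
Lemma inM2 x : s2 x -> (x <= M2)%MS.
Proof. by move=> Sx; apply/HM2; exact: qspan_sub. Qed.

Lemma capM x : (x <= M1)%MS -> (x <= M2)%MS -> (x <= a)%MS.
Proof.
move=> /HM1 h1 /HM2 h2; case: (proj1 (Hcap x) (conj h1 h2)) => t ->.
exact: scalemx_sub (submx_refl a).
Qed.

Lemma sg_cone : cone sg.
Proof.
have [S10 [S1D S1Z]] := Hc1; have [S20 [S2D S2Z]] := Hc2.
split; first by apply/Hdec; exists 0, 0; rewrite addr0.
split.
  move=> x y /Hdec [x1 [x2 [h1 [h2 ->]]]] /Hdec [y1 [y2 [g1 [g2 ->]]]].
  apply/Hdec; exists (x1 + y1), (x2 + y2); split; first exact: S1D.
  split; first exact: S2D.
  by rewrite addrACA.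
move=> t x t0 /Hdec [x1 [x2 [h1 [h2 ->]]]]; apply/Hdec.
exists (t *: x1), (t *: x2); split; first exact: S1Z.
by split; [exact: S2Z | rewrite scalerDr].
Qed.

Lemma sg_sc : strongly_convex sg.
Proof.
have [S10 [S1D S1Z]] := Hc1; have [S20 [S2D S2Z]] := Hc2.
move=> x /Hdec [x1 [x2 [h1 [h2 xE]]]] /Hdec [y1 [y2 [g1 [g2 yE]]]].
have E : x1 + y1 = - (x2 + y2).
  apply/eqP; rewrite -addr_eq0 addrACA -xE -yE subrr //.
have [t tE] : exists t, x1 + y1 = t *: a.
  apply/Hcap; split; first by apply: qspan_sub; exact: S1D.
  rewrite E -scaleN1r; apply: qspanZ; apply: qspan_sub; exact: S2D.
case: (leP 0 t) => t0.
  have u0 : x2 + y2 = 0.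
    apply: (sc_sum0 Hsc2 Hc2 (S2D _ _ h2 g2) (S2Z _ _ t0 Ha2)).
    by rewrite -tE E subrr.
  have x20 : x2 = 0 by apply: (sc_sum0 Hsc2 Hc2 h2 g2).
  have u1 : x1 + y1 = 0 by rewrite E u0 oppr0.
  have x10 : x1 = 0 by apply: (sc_sum0 Hsc1 Hc1 h1 g1).
  by rewrite xE x10 x20 addr0.
have t0' : 0 <= - t by rewrite oppr_ge0 ltW.
have u1 : x1 + y1 = 0.
  apply: (sc_sum0 Hsc1 Hc1 (S1D _ _ h1 g1) (S1Z _ _ t0' Ha1)).
  by rewrite tE scaleNr subrr.
have x10 : x1 = 0 by apply: (sc_sum0 Hsc1 Hc1 h1 g1).
have u0 : x2 + y2 = 0 by apply/eqP; rewrite -oppr_eq0 -E u1.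
have x20 : x2 = 0 by apply: (sc_sum0 Hsc2 Hc2 h2 g2).
by rewrite xE x10 x20 addr0.
Qed.

Lemma rays_sigma F : is_extreme_ray sg F ->
  (forall x, F x -> s1 x) \/ (forall x, F x -> s2 x).
Proof.
move=> [HF Hd]; have [r [rn [sgr Er]]] := ray_char sg_cone sg_sc HF Hd.
have [c [cpos Fc]] := HF.
have Fr : F r := proj2 (Er r) (ray_self r).
have cr : dot c r = 0 by case/Fc: Fr.
case/Hdec: sgr => x1 [x2 [h1 [h2 rE]]].
have c1 := cpos _ (sub1 h1); have c2 := cpos _ (sub2 h2).
have cx1 : dot c x1 = 0 by move: cr; rewrite rE dotDr; lra.
have [t1 [t10 x1E]] : ray r x1 by apply/Er/Fc; split => //; exact: sub1.
have [S10 [S1D S1Z]] := Hc1; have [S20 [S2D S2Z]] := Hc2.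
case: (eqVneq t1 0) => [t1z|t1n].
  right; have s2r : s2 r by rewrite rE x1E t1z scale0r add0r.
  by move=> x /Er [u [u0 ->]]; exact: S2Z.
left; have s1r : s1 r.
  have -> : r = t1^-1 *: x1 by rewrite x1E scalerA mulVf // scale1r.
  by apply: S1Z => //; rewrite invr_ge0.
by move=> x /Er [u [u0 ->]]; exact: S1Z.
Qed.

Lemma through_a F : is_extreme_ray sg F -> F a ->
  on_extreme_ray s1 a /\ on_extreme_ray s2 a.
Proof.
move=> HFF Fa; have [HF Hd] := HFF.
have [r [rn [sgr Er]]] := ray_char sg_cone sg_sc HF Hd.
have Ea := ray_rescale Er Fa Ha0.
have [S10 [S1D S1Z]] := Hc1; have [S20 [S2D S2Z]] := Hc2.
split; exists F; split => //; apply: (restrict_ray HFF).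
- exact: sub1.
- by move=> x /Ea [u [u0 ->]]; exact: S1Z.
- exact: sub2.
- by move=> x /Ea [u [u0 ->]]; exact: S2Z.
Qed.

Lemma ext_i R : is_extreme_ray s1 R -> ~ R a -> is_extreme_ray sg R.
Proof.
move=> [[c1 [c1pos Rc]] HR] nRa.
have [g Hg] := pos_functional Hp2 Hsc2.
have c1a : 0 < dot c1 a.
  rewrite lt_def c1pos // andbT; apply/eqP => h; apply: nRa; exact/Rc.
have ga : 0 < dot g a.
  have [g0 g1] := Hg a Ha2; rewrite lt_def g0 andbT; apply/eqP => /g1 h.
  by move: Ha0; rewrite h eqxx.
pose lam := dot c1 a / dot g a.
have lam0 : 0 < lam by rewrite divr_gt0.
have [c [Hc1' Hc2']] : exists c, (forall x, (x <= M1)%MS -> dot c x = dot c1 x) /\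
                    (forall x, (x <= M2)%MS -> dot c x = dot (lam *: g) x).
  apply: extend; first exact: capM.
  by rewrite dotZl /lam divfK // gt_eqF.
split=> //; exists c; split.
  move=> x /Hdec [x1 [x2 [h1 [h2 ->]]]].
  rewrite dotDr (Hc1' _ (inM1 h1)) (Hc2' _ (inM2 h2)) dotZl.
  apply: addr_ge0; first exact: c1pos.
  by apply: mulr_ge0; [exact: ltW | case: (Hg _ h2)].
move=> x; split.
  move=> Rx; have [s1x cx] := proj1 (Rc x) Rx.
  by split; [exact: sub1 | rewrite (Hc1' _ (inM1 s1x))].
move=> [/Hdec [x1 [x2 [h1 [h2 xE]]]]].
rewrite xE dotDr (Hc1' _ (inM1 h1)) (Hc2' _ (inM2 h2)) dotZl => h0.
have p1 := c1pos _ h1; have [p2 z2] := Hg _ h2.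
have p2' : 0 <= lam * dot g x2 by rewrite mulr_ge0 // ltW.
have e1 : dot c1 x1 = 0 by lra.
have e2 : lam * dot g x2 = 0 by lra.
move: e2 => /eqP; rewrite mulf_eq0 gt_eqF //= => /eqP /z2 x20.
by rewrite x20 addr0; apply/Rc.
Qed.

Lemma ext_ii R1 R2 : is_extreme_ray s1 R1 -> R1 a ->
  is_extreme_ray s2 R2 -> R2 a -> is_extreme_ray sg R1.
Proof.
move=> [HF1 Hd1] R1a [HF2 Hd2] R2a.
have [r1 [_ [_ Er1]]] := ray_char Hc1 Hsc1 HF1 Hd1.
have [r2 [_ [_ Er2]]] := ray_char Hc2 Hsc2 HF2 Hd2.
have Ea1 := ray_rescale Er1 R1a Ha0.
have Ea2 := ray_rescale Er2 R2a Ha0.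
have [c1 [c1pos Rc1]] := HF1; have [c2 [c2pos Rc2]] := HF2.
have c1a : dot c1 a = 0 by case/Rc1: R1a.
have c2a : dot c2 a = 0 by case/Rc2: R2a.
have [c [Hc1' Hc2']] : exists c, (forall x, (x <= M1)%MS -> dot c x = dot c1 x) /\
                    (forall x, (x <= M2)%MS -> dot c x = dot c2 x).
  by apply: extend; [exact: capM | rewrite c1a c2a].
have [S10 [S1D S1Z]] := Hc1.
split=> //; exists c; split.
  move=> x /Hdec [x1 [x2 [h1 [h2 ->]]]].
  rewrite dotDr (Hc1' _ (inM1 h1)) (Hc2' _ (inM2 h2)).
  by apply: addr_ge0; [exact: c1pos | exact: c2pos].
move=> x; split.
  move=> Rx; have [s1x cx] := proj1 (Rc1 x) Rx.
  by split; [exact: sub1 | rewrite (Hc1' _ (inM1 s1x))].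
move=> [/Hdec [x1 [x2 [h1 [h2 xE]]]]].
rewrite xE dotDr (Hc1' _ (inM1 h1)) (Hc2' _ (inM2 h2)) => h0.
have p1 := c1pos _ h1; have p2 := c2pos _ h2.
have e1 : dot c1 x1 = 0 by lra.
have e2 : dot c2 x2 = 0 by lra.
have /Ea1 [u1 [u10 ->]] : R1 x1 by apply/Rc1.
have /Ea2 [u2 [u20 ->]] : R2 x2 by apply/Rc2.
apply/Ea1; exists (u1 + u2); split; first exact: addr_ge0.
by rewrite scalerDl.
Qed.

Lemma cross R1 R2 : is_extreme_ray s1 R1 -> is_extreme_ray s2 R2 ->
  (forall x, R1 x <-> R2 x) -> R1 a.
Proof.
move=> [HF1 Hd1] [HF2 Hd2] E.
have [r [rn [s1r Er]]] := ray_char Hc1 Hsc1 HF1 Hd1.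
have R1r : R1 r := proj2 (Er r) (ray_self r).
have s2r : s2 r by apply: (face_sub HF2); apply/E.
have [t rE] : exists t, r = t *: a by apply/Hcap; split; exact: qspan_sub.
have tn : t != 0 by apply: contraNneq rn => t0; rewrite rE t0 scale0r.
case: (ltP 0 t) => tp.
  have -> : a = t^-1 *: r by rewrite rE scalerA mulVf // scale1r.
  by apply: (face_scale Hc1 HF1 R1r); rewrite invr_ge0 ltW.
exfalso; have tneg : t < 0 by rewrite lt_neqAle tn tp.
have [S10 [S1D S1Z]] := Hc1.
have : s1 (- a).
  have -> : - a = (- t)^-1 *: r.
    by rewrite rE scalerA invrN mulNr mulVf // scaleN1r.
  by apply: S1Z => //; rewrite invr_ge0 oppr_ge0 ltW.
by move=> /(Hsc1 Ha1) a0; move: Ha0; rewrite a0 eqxx.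
Qed.

End Main.

Lemma ray_a n (S R : qset n) a : cone S -> strongly_convex S -> is_extreme_ray S R -> R a ->
  a != 0 -> forall x, R x <-> ray a x.
Proof.
move=> Hc Hsc [HF Hd] Ra an; have [r [_ [_ Er]]] := ray_char Hc Hsc HF Hd.
exact: ray_rescale Er Ra an.
Qed.

Section Count.
Variables (n d1 d2 : nat) (s1 s2 sg : qset n) (a : vec n).
Implicit Types (x y c r : vec n) (F R : qset n).
Variables (M1 : 'M[rat]_(d1, n)) (M2 : 'M[rat]_(d2, n)).
Hypotheses (Hp1 : poly_cone s1) (Hp2 : poly_cone s2).
Hypotheses (Hsc1 : strongly_convex s1) (Hsc2 : strongly_convex s2).
Hypotheses (Ha0 : a != 0) (Ha1 : s1 a) (Ha2 : s2 a).
Hypothesis (HM1 : forall x : vec n, qspan s1 x <-> (x <= M1)%MS).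
Hypothesis (HM2 : forall x : vec n, qspan s2 x <-> (x <= M2)%MS).
Hypothesis (Hcap : forall x : vec n, (qspan s1 x /\ qspan s2 x) <-> exists t : rat, x = t *: a).
Hypothesis (Hdec : forall x : vec n, sg x <-> exists x1 x2, s1 x1 /\ s2 x2 /\ x = x1 + x2).

Lemma Hcap' x : (qspan s2 x /\ qspan s1 x) <-> exists t : rat, x = t *: a.
Proof. by rewrite -Hcap; split => [[]|[]]. Qed.
Lemma Hdec' x : sg x <-> exists x1 x2, s2 x1 /\ s1 x2 /\ x = x1 + x2.
Proof.
rewrite Hdec; split => [[x1 [x2 [h1 [h2 ->]]]]|[x1 [x2 [h1 [h2 ->]]]]];
  by exists x2, x1; rewrite addrC.
Qed.

Lemma sub1' x : s1 x -> sg x.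
Proof. by move=> Sx; apply/Hdec; exists x, 0; rewrite addr0; case: (poly_cone_cone Hp2). Qed.
Lemma sub2' x : s2 x -> sg x.
Proof. by move=> Sx; apply/Hdec; exists 0, x; rewrite add0r; case: (poly_cone_cone Hp1). Qed.

Variables (k1 k2 : nat) (f1 : 'I_k1 -> qset n) (f2 : 'I_k2 -> qset n).
Hypothesis (Hf1 : forall i, is_extreme_ray s1 (f1 i)).
Hypothesis (If1 : forall i j, (forall x, f1 i x <-> f1 j x) -> i = j).
Hypothesis (Sf1 : forall F, is_extreme_ray s1 F -> exists i, forall x, F x <-> f1 i x).
Hypothesis (Hf2 : forall i, is_extreme_ray s2 (f2 i)).
Hypothesis (If2 : forall i j, (forall x, f2 i x <-> f2 j x) -> i = j).
Hypothesis (Sf2 : forall F, is_extreme_ray s2 F -> exists i, forall x, F x <-> f2 i x).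

Lemma sg_surj F : is_extreme_ray sg F ->
  (exists i, forall x, F x <-> f1 i x) \/ (exists j, forall x, F x <-> f2 j x).
Proof.
move=> HF.
case: (rays_sigma (s1:=s1) (s2:=s2) (sg:=sg) (a:=a) Hp1 Hp2 Hsc1 Hsc2 Ha1 Ha2 Hcap Hdec HF) => sub.
  by left; apply: Sf1; apply: (restrict_ray HF) => //; exact: sub1'.
by right; apply: Sf2; apply: (restrict_ray HF) => //; exact: sub2'.
Qed.

Lemma internal : ~ on_extreme_ray s1 a -> ~ on_extreme_ray s2 a ->
  num_extreme_rays sg (k1 + k2).
Proof.
move=> N1 N2; apply: (num_split (g:=f1) (h:=f2)) => //.
- move=> i; apply: (ext_i (s1:=s1) (s2:=s2) (sg:=sg) (a:=a) (M1:=M1) (M2:=M2)) => //.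
  by move=> h; apply: N1; exists (f1 i).
- move=> j; apply: (ext_i (s1:=s2) (s2:=s1) (sg:=sg) (a:=a) (M1:=M2) (M2:=M1)) => //.
  + exact: Hcap'.
  + exact: Hdec'.
  by move=> h; apply: N2; exists (f2 j).
- move=> i j E; apply: N1; exists (f1 i); split => //.
  exact: (cross (s1:=s1) (s2:=s2) (a:=a) Hp1 Hsc1 Ha0 Ha1 Hcap (Hf1 i) (Hf2 j) E).
- exact: sg_surj.
Qed.

Lemma external i0 : f1 i0 a -> num_extreme_rays sg (k1 + k2 - 1).
Proof.
move=> Fa.
have k1p : (0 < k1)%N by apply: leq_ltn_trans (ltn_ord i0).
set j0 := i0; set g1 := f1.
have Ig1 := If1; have Sg1 := Sf1; have Hg1 := Hf1.
have Hc1 := poly_cone_cone Hp1; have Hc2 := poly_cone_cone Hp2.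
have Ea := ray_a Hc1 Hsc1 (Hg1 j0) Fa Ha0.
have nolift j : ~ g1 (lift j0 j) a.
  move=> h; have Eb := ray_a Hc1 Hsc1 (Hg1 (lift j0 j)) h Ha0.
  have : lift j0 j = j0 by apply: Ig1 => x; rewrite Ea Eb.
  by move/eqP; rewrite eq_sym (negbTE (neq_lift j0 j)).
rewrite -{1}(prednK k1p) addSn subn1 /=.
apply: (num_split (g:=fun j => g1 (lift j0 j)) (h:=f2)) => //.
- move=> j; apply: (ext_i (s1:=s1) (s2:=s2) (sg:=sg) (a:=a) (M1:=M1) (M2:=M2)) => //; exact: nolift.
- move=> j; case: (classic (f2 j a)) => h.
    exact: (ext_ii (s1:=s2) (s2:=s1) (sg:=sg) (a:=a) (M1:=M2) (M2:=M1)
       Hp2 Hp1 Hsc2 Hsc1 Ha0 HM2 HM1 Hcap' Hdec' (Hf2 j) h (Hg1 j0) Fa).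
  apply: (ext_i (s1:=s2) (s2:=s1) (sg:=sg) (a:=a) (M1:=M2) (M2:=M1)) => //.
  + exact: Hcap'.
  + exact: Hdec'.
- by move=> i i' /Ig1 /lift_inj.
- move=> i j E; apply: (nolift i).
  exact: (cross (s1:=s1) (s2:=s2) (a:=a) Hp1 Hsc1 Ha0 Ha1 Hcap (Hg1 _) (Hf2 j) E).
move=> F HF.
case: (rays_sigma (s1:=s1) (s2:=s2) (sg:=sg) (a:=a) Hp1 Hp2 Hsc1 Hsc2 Ha1 Ha2 Hcap Hdec HF) => sub.
  have [i Fi] : exists i, forall x, F x <-> g1 i x.
    by apply: Sg1; apply: (restrict_ray HF) => //; exact: sub1'.
  case: (eqVneq j0 i) => [ei|ni].
    right; have Fa' : F a by apply/Fi; rewrite -ei.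
    have [_ [F2 [HF2 F2a]]] := through_a (s1:=s1) (s2:=s2) (sg:=sg) (a:=a)
       Hp1 Hp2 Hsc1 Hsc2 Ha0 Ha1 Ha2 Hcap Hdec HF Fa'.
    have [j Fj] := Sf2 HF2.
    exists j => x.
    have E2 := ray_a Hc2 Hsc2 (Hf2 j) (proj1 (Fj a) F2a) Ha0.
    rewrite E2 Fi -ei; exact: Ea.
  left; have [j ij _] := unlift_some ni.
  by exists j => x; rewrite Fi ij.
by right; apply: Sf2; apply: (restrict_ray HF) => //; exact: sub2'.
Qed.

End Count.

Lemma dim_sg n d1 d2 (s1 s2 sg : qset n) (a : vec n) (M1 : 'M[rat]_(d1, n)) (M2 : 'M[rat]_(d2, n))
  (n1 n2 : nat) :
  poly_cone s1 -> poly_cone s2 -> a != 0 -> s1 a -> s2 a ->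
  (forall x : vec n, qspan s1 x <-> (x <= M1)%MS) ->
  (forall x : vec n, qspan s2 x <-> (x <= M2)%MS) ->
  (forall x : vec n, (qspan s1 x /\ qspan s2 x) <-> exists t : rat, x = t *: a) ->
  (forall x : vec n, sg x <-> exists x1 x2, s1 x1 /\ s2 x2 /\ x = x1 + x2) ->
  \rank M1 = n1 -> \rank M2 = n2 -> has_dim sg (n1 + n2 - 1).
Proof.
move=> Hp1 Hp2 Ha0 Ha1 Ha2 HM1 HM2 Hcap Hdec r1 r2.
have [S10 _] := poly_cone_cone Hp1; have [S20 _] := poly_cone_cone Hp2.
have sub1 x : s1 x -> sg x by move=> Sx; apply/Hdec; exists x, 0; rewrite addr0.
have sub2 x : s2 x -> sg x by move=> Sx; apply/Hdec; exists 0, x; rewrite add0r.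
have E : forall x, qspan sg x <-> (x <= M1 + M2)%MS.
  move=> x; split.
    move=> [m [v [l [H ->]]]]; apply: summx_sub => i _; apply: scalemx_sub.
    have [x1 [x2 [h1 [h2 ->]]]] := proj1 (Hdec _) (H i).
    by apply: addmx_sub_adds; [apply/HM1 | apply/HM2]; exact: qspan_sub.
  move=> /sub_addsmxP [[u1 u2] ->] /=; apply: qspanD.
    by apply: (qspan_mono sub1); apply/HM1; exact: submxMl.
  by apply: (qspan_mono sub2); apply/HM2; exact: submxMl.
have cap1 : \rank (M1 :&: M2)%MS = 1%N.
  have a1 : \rank a = 1%N by rewrite rank_rV Ha0.
  apply/eqP; rewrite eqn_leq; apply/andP; split.
    rewrite -a1; apply: mxrankS; apply/row_subP => i.
    have h1 : (row i (M1 :&: M2) <= M1)%MS := submx_trans (row_sub i _) (capmxSl _ _).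
    have h2 : (row i (M1 :&: M2) <= M2)%MS := submx_trans (row_sub i _) (capmxSr _ _).
    have [t ->] := proj1 (Hcap _) (conj (proj2 (HM1 _) h1) (proj2 (HM2 _) h2)).
    exact: scalemx_sub (submx_refl a).
  rewrite -a1; apply: mxrankS; rewrite sub_capmx; apply/andP; split.
    by apply/HM1; exact: qspan_sub.
  by apply/HM2; exact: qspan_sub.
have := mxrank_sum_cap M1 M2; rewrite cap1 r1 r2 => e.
by rewrite -e addn1 subn1 /=; exact: has_dim_rank E.
Qed.

Unset Implicit Arguments.
Unset Strict Implicit.

Theorem theorem2p4 (n : nat) (s1 s2 : qset n) (n1 n2 k1 k2 : nat) (a : vec n) :
  poly_cone s1 -> poly_cone s2 ->
  strongly_convex s1 -> strongly_convex s2 ->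
  has_dim s1 n1 -> has_dim s2 n2 ->
  num_extreme_rays s1 k1 -> num_extreme_rays s2 k2 ->
  a != 0 -> s1 a -> s2 a ->
  (forall x, (qspan s1 x /\ qspan s2 x) <-> exists t : rat, x = t *: a) ->
  let s := qpos (fun x => s1 x \/ s2 x) in
  has_dim s (n1 + n2 - 1)%N /\
  (~ external_type s1 s2 a -> num_extreme_rays s (k1 + k2)%N) /\
  (external_type s1 s2 a -> num_extreme_rays s (k1 + k2 - 1)%N).
Proof.
move=> Hp1 Hp2 Hsc1 Hsc2 /span_mx [M1 [r1 HM1]] /span_mx [M2 [r2 HM2]]
  [f1 [Hf1 [If1 Sf1]]] [f2 [Hf2 [If2 Sf2]]] Ha0 Ha1 Ha2 Hcap s.
have [S10 [S1D S1Z]] := poly_cone_cone Hp1; have [S20 [S2D S2Z]] := poly_cone_cone Hp2.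
have Hdec : forall x, s x <-> exists x1 x2, s1 x1 /\ s2 x2 /\ x = x1 + x2.
  move=> x; split.
    move=> [m [v [l [Hv [Hl ->]]]]].
    elim/big_rec: _ => [|i y _ [y1 [y2 [g1 [g2 ->]]]]]; first by exists 0, 0; rewrite addr0.
    case: (Hv i) => h.
      exists (l i *: v i + y1), y2; split; first by apply: S1D => //; exact: S1Z.
      by split=> //; rewrite addrA.
    exists y1, (l i *: v i + y2); split=> //; split; first by apply: S2D => //; exact: S2Z.
    by rewrite addrCA.
  move=> [x1 [x2 [h1 [h2 ->]]]]; apply: qposD; apply: qpos_sub; [left|right] => //.
split; first exact: (dim_sg Hp1 Hp2 Ha0 Ha1 Ha2 HM1 HM2 Hcap Hdec r1 r2).
split.
  move=> Next; apply: (internal Hp1 Hp2 Hsc1 Hsc2 Ha0 Ha1 Ha2 HM1 HM2 Hcap Hdec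
     Hf1 If1 Sf1 Hf2 If2 Sf2).
    by move=> h; apply: Next; left.
  by move=> h; apply: Next; right.
case=> [[F [HF Fa]]|[F [HF Fa]]].
  have [i0 Fi] := Sf1 F HF.
  exact: (external Hp1 Hp2 Hsc1 Hsc2 Ha0 Ha1 Ha2 HM1 HM2 Hcap Hdec
     Hf1 If1 Sf1 Hf2 If2 Sf2 (proj1 (Fi a) Fa)).
have [i0 Fi] := Sf2 F HF.
have Hcap' : forall x, (qspan s2 x /\ qspan s1 x) <-> exists t : rat, x = t *: a.
  by move=> x; rewrite -Hcap; split => [[]|[]].
have Hdec' : forall x, s x <-> exists x1 x2, s2 x1 /\ s1 x2 /\ x = x1 + x2.
  move=> x; rewrite Hdec; split => [[x1 [x2 [h1 [h2 ->]]]]|[x1 [x2 [h1 [h2 ->]]]]];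
    by exists x2, x1; rewrite addrC.
rewrite addnC.
exact: (external Hp2 Hp1 Hsc2 Hsc1 Ha0 Ha2 Ha1 HM2 HM1 Hcap' Hdec'
     Hf2 If2 Sf2 Hf1 If1 Sf1 (proj1 (Fi a) Fa)).
Qed.
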